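(* Let $(M,M_0)$ be a manifold–submanifold pair, $(X,x_0)$ a based space, $C=C(M,M_0;X)$ and $V=\bigvee_{k\ge1}D_k$. Then $\Psi\circ\sigma=(\sigma\triangle\sigma)\circ\Delta$ as maps $C\to\mathrm{SP}(V\wedge V)$.
   Context: $C(M,M_0;X)$ is the space of finite labelled configurations $\xi_I=\{(m_i,x_i)\}_{i\in I}$ ($m_i\in M$ pairwise distinct, $x_i\in X$) modulo the relation generated by $\xi_I\sim\xi_I\cup\{(m,x)\}$ whenever $m\in M_0$ or $x=x_0$; $\xi_J=\{(m_i,x_i)\}_{i\in J}$ for $J\subseteq I$. $C_k$ is the subspace of configurations with at most $k$ points, $D_k=C_k/C_{k-1}$ based at the collapsed point, $V=\bigvee_{k\ge1}D_k$. For a based space $(Y,e)$, $\mathrm{SP}(Y)$ is the free unital abelian monoid on $Y$ with identity $e$. The scanning map $\sigma:C\to\mathrm{SP}(V)$ is $\xi_I\mapsto\sum_{J\subseteq I}\xi_J$. $\Delta:C\to C\wedge C$ is the diagonal $\xi\mapsto(\xi,\xi)$. $\Psi:V\to\mathrm{SP}(V\wedge V)$ is $\xi_I\mapsto\sum_{A,B\subseteq I,\ A\cup B=I}(\xi_A,\xi_B)$, also denoting its extension to a monoid homomorphism $\mathrm{SP}(V)\to\mathrm{SP}(V\wedge V)$. For based maps $f:A\to\mathrm{SP}(B)$, $g:A'\to\mathrm{SP}(B')$, $f\triangle g:A\wedge A'\to\mathrm{SP}(B\wedge B')$ sends $(a,a')$ to $\sum_{i,j}(b_i,b'_j)$ where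 $f(a)=\sum_i b_i$, $g(a')=\sum_j b'_j$. *)

(* Defs.v *)
From Stdlib Require Import Relations Permutation.
From mathcomp Require Import all_boot.

Unset Implicit Arguments.
Unset Strict Implicit.
Unset Printing Implicit Defensive.

Section Config.
Variables (M X : Type) (M0 : M -> Prop) (x0 : X).

(* A (raw) finite labelled configuration: an indexed family of points
   (m_i, x_i), i in I = 'I_n. *)
Record cfg := Cfg { csize : nat; cpt : 'I_csize -> M * X }.
Arguments cpt : clear implicits.

Definition cfg_valid (xi : cfg) : Prop :=
  injective (fun i : 'I_(csize xi) => (cpt xi i).1).

Definition pts (xi : cfg) (p : M * X) : Prop := exists i, cpt xi i = p.

Definition restrict (xi : cfg) (J : {set 'I_(csize xi)}) : cfg :=
  @Cfg #|J| (fun j : 'I_#|J| => cpt xi (enum_val j)).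

Definition cstep (xi xi' : cfg) : Prop :=
  (forall p, pts xi' p <-> pts xi p) \/
  exists (m : M) (x : X), (M0 m \/ x = x0) /\ (forall y, ~ pts xi (m, y)) /\
    (forall p, pts xi' p <-> pts xi p \/ p = (m, x)).

(* equality of points of C = C(M,M0;X): the generated equivalence relation *)
Definition ceq : relation cfg := clos_refl_sym_trans cfg cstep.

Definition inCk (k : nat) (xi : cfg) : Prop :=
  exists xi', ceq xi xi' /\ cfg_valid xi' /\ csize xi' <= k.

(* points of V = \bigvee_{k>=1} D_k, D_k = C_k / C_{k-1}, are represented by
   pairs (k, xi) with xi in C_k; the pair is the basepoint iff xi in C_{k-1}
   (for k = 0, only the empty configuration is used, which is the basepoint). *)
Definition Vpt := (nat * cfg)%type.
Definition vbase (v : Vpt) : Prop := inCk v.1.-1 v.2.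
Definition veq (v w : Vpt) : Prop :=
  (v.1 = w.1 /\ ceq v.2 w.2) \/ (vbase v /\ vbase w).

Definition sbase (p : Vpt * Vpt) : Prop := vbase p.1 \/ vbase p.2.
Definition seqv (p q : Vpt * Vpt) : Prop :=
  (veq p.1 q.1 /\ veq p.2 q.2) \/ (sbase p /\ sbase q).

Definition vel (xi : cfg) (J : {set 'I_(csize xi)}) : Vpt := (#|J|, restrict xi J).

Definition sigma (xi : cfg) : seq Vpt :=
  [seq vel xi J | J <- enum {set 'I_(csize xi)}].

Definition Delta (xi : cfg) : cfg * cfg := (xi, xi).

Definition Psi (v : Vpt) : seq (Vpt * Vpt) :=
  [seq (vel v.2 AB.1, vel v.2 AB.2) |
     AB <- [seq (A, B) | A <- enum {set 'I_(csize v.2)},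
                         B <- enum {set 'I_(csize v.2)}] &
     AB.1 :|: AB.2 == setT].

Definition Psi_SP (s : seq Vpt) : seq (Vpt * Vpt) := flatten (map Psi s).

End Config.

Definition tri (A A' B B' : Type) (f : A -> seq B) (g : A' -> seq B')
  (a : A * A') : seq (B * B') :=
  [seq (b, b') | b <- f a.1, b' <- g a.2].

(* Equality in SP(Y) = free unital abelian monoid on the based set (Y, e),
   where Y is given as a setoid (eqY) and `base` characterizes the basepoint e:
   two formal sums agree iff, after discarding copies of e, they agree as
   multisets of points of Y. *)
Definition sp_eq (Y : Type) (base : Y -> Prop) (eqY : Y -> Y -> Prop)
  (s1 s2 : seq Y) : Prop :=
  exists r1 r2 z1 z2 : seq Y,
    Permutation s1 (r1 ++ z1) /\ Permutation s2 (r2 ++ z2) /\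
    List.Forall base z1 /\ List.Forall base z2 /\ List.Forall2 eqY r1 r2.

(* Main.v *)
Require Import Defs.
From Stdlib Require Import Relations Permutation.
From mathcomp Require Import all_boot.

Lemma perm_eq_Permutation (T : eqType) (s t : seq T) :
  perm_eq s t -> Permutation s t.
Proof.
elim: s t => [|x s IH] t Hp.
  by move/perm_size: Hp; case: t.
have xt : x \in t by rewrite -(perm_mem Hp) mem_head.
case/splitPr: xt Hp => t1 t2 Hp.
have H2 : perm_eq (t1 ++ x :: t2) (x :: (t1 ++ t2)).
  by rewrite -cat1s perm_catCA.
have H3 : perm_eq s (t1 ++ t2) by rewrite -(perm_cons x) (perm_trans Hp H2).
apply: Permutation_trans (Permutation_middle t1 t2 x).
by constructor; apply: IH.
Qed.

Lemma F2_flatten (S A B : Type) (R : A -> B -> Prop) (f : S -> seq A)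
  (g : S -> seq B) (s : seq S) :
  (forall x, List.Forall2 R (f x) (g x)) ->
  List.Forall2 R (flatten (map f s)) (flatten (map g s)).
Proof.
move=> H; elim: s => [|x s IH] /=; first by constructor.
by apply: List.Forall2_app.
Qed.

Lemma F2_map (S A B : Type) (R : A -> B -> Prop) (f : S -> A) (g : S -> B)
  (s : seq S) : (forall x, R (f x) (g x)) -> List.Forall2 R (map f s) (map g s).
Proof. by move=> H; elim: s => [|x s IH] /=; constructor. Qed.

Lemma allpairs_map2 (S A : Type) (f : S -> A) (s t : seq S) :
  [seq (b, b') | b <- map f s, b' <- map f t] =
  map (fun p => (f p.1, f p.2)) [seq (a, b) | a <- s, b <- t].
Proof.
elim: s => [|x s IH] //=.
by rewrite map_cat IH -!map_comp.
Qed.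

Lemma uniq_flatten_part (S T : eqType) (f : S -> seq T) (k : T -> S)
  (s : seq S) : uniq s -> (forall x, uniq (f x)) ->
  (forall x y, y \in f x -> k y = x) -> uniq (flatten (map f s)).
Proof.
move=> + Hu Hk; elim: s => [|x s IH] //= /andP [xs us].
rewrite cat_uniq Hu IH // andbT.
apply/hasPn => y /flatten_mapP [z zs yz]; apply/negP => yfx.
have e1 := Hk _ _ yz; have e2 := Hk _ _ yfx.
by move: xs; rewrite -e2 e1 zs.
Qed.

Lemma img_setT (n : nat) (J : {set 'I_n}) :
  [set enum_val a | a in [set: 'I_#|J|]] = J.
Proof.
apply/setP => x; apply/imsetP/idP.
  by case=> a _ ->; exact: enum_valP.
by move=> xJ; exists (enum_rank_in xJ x); rewrite ?in_setT ?enum_rankK_in.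
Qed.

Lemma img_pre (n : nat) (J J1 : {set 'I_n}) : J1 \subset J ->
  [set enum_val a | a in [set a : 'I_#|J| | enum_val a \in J1]] = J1.
Proof.
move=> sub; apply/setP => x; apply/imsetP/idP.
  by case=> a; rewrite inE => ? ->.
move=> xJ1; have xJ : x \in J by apply: (subsetP sub).
by exists (enum_rank_in xJ x); rewrite ?inE enum_rankK_in.
Qed.

Section Proof.
Variables (M X : Type) (M0 : M -> Prop) (x0 : X).

Lemma pts_restrict (xi : cfg M X) (S : {set 'I_(csize M X xi)}) p :
  pts M X (restrict M X xi S) p <-> exists2 i, i \in S & cpt M X xi i = p.
Proof.
split.
  case=> j /= <-; exists (enum_val j) => //; exact: enum_valP.
case=> i iS <-; exists (enum_rank_in iS i) => /=.
by rewrite enum_rankK_in.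
Qed.

Definition img {n : nat} (J : {set 'I_n}) (A : {set 'I_#|J|}) : {set 'I_n} :=
  [set enum_val a | a in A].
Arguments img {n}.

Lemma vel_img (xi : cfg M X) (J : {set 'I_(csize M X xi)})
  (A : {set 'I_#|J|}) :
  veq M X M0 x0 (vel M X (restrict M X xi J) A) (vel M X xi (img J A)).
Proof.
left; split.
  by rewrite /= card_imset //; exact: enum_val_inj.
apply: rst_step; left => p /=.
rewrite !pts_restrict; split.
  case=> i /imsetP [a aA ->] <-.
  exists a => //.
case=> a aA <-; exists (enum_val a) => //.
by apply/imsetP; exists a.
Qed.

End Proof.

Theorem proposition2p2 (M X : Type) (M0 : M -> Prop) (x0 : X)
  (xi : cfg M X) (Hxi : cfg_valid M X xi) :
  sp_eq (Vpt M X * Vpt M X) (sbase M X M0 x0) (seqv M X M0 x0)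
    (Psi_SP M X (sigma M X xi))
    (tri (cfg M X) (cfg M X) (Vpt M X) (Vpt M X)
       (sigma M X) (sigma M X) (Delta M X xi)).
Proof.
set n := csize M X xi.
set h := fun p : {set 'I_n} * {set 'I_n} => (vel M X xi p.1, vel M X xi p.2).
set PJ := fun J : {set 'I_n} =>
  [seq (img J AB.1, img J AB.2) |
     AB <- [seq (A, B) | A <- enum {set 'I_#|J|}, B <- enum {set 'I_#|J|}] &
     AB.1 :|: AB.2 == setT].
set P := flatten (map PJ (enum {set 'I_n})).
set AP := [seq (a, b) | a <- enum {set 'I_n}, b <- enum {set 'I_n}].
have HP : perm_eq AP P.
  apply: uniq_perm.
  - apply: allpairs_uniq; rewrite ?enum_uniq //.
    by move=> [a b] [c d] _ _ /= [-> ->].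
  - apply: (@uniq_flatten_part _ _ PJ (fun p => p.1 :|: p.2)).
    + exact: enum_uniq.
    + move=> J; rewrite /PJ map_inj_uniq.
        rewrite filter_uniq // allpairs_uniq ?enum_uniq //.
        by move=> [a b] [c d] _ _ /= [-> ->].
      move=> [a b] [c d] /= [] /(imset_inj (@enum_val_inj _ _)) ->
        /(imset_inj (@enum_val_inj _ _)) -> //.
    + move=> J y /mapP [[A B]]; rewrite mem_filter /= => /andP [/eqP AB _] ->.
      by rewrite /img /= -imsetU AB img_setT.
  - move=> [J1 J2]; apply/idP/idP => _.
      apply/flatten_mapP; exists (J1 :|: J2); first by rewrite mem_enum.
      apply/mapP.
      exists ([set a : 'I_#|J1 :|: J2| | enum_val a \in J1],
              [set a : 'I_#|J1 :|: J2| | enum_val a \in J2]).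
        rewrite mem_filter /=; apply/andP; split.
          apply/eqP/setP => a; rewrite !inE -in_setU.
          exact: (enum_valP a).
        by apply/allpairsP; eexists (_, _); split; [exact: mem_enum | exact: mem_enum | reflexivity].
      by rewrite /img !img_pre ?subsetUl ?subsetUr.
    by apply/allpairsP; exists (J1, J2); rewrite /= !mem_enum.
exists (Psi_SP M X (sigma M X xi)), (map h P), [::], [::].
split; first by rewrite cats0.
split.
  rewrite cats0 /tri /= /sigma allpairs_map2.
  apply: Permutation_map; apply: perm_eq_Permutation; exact: HP.
do 2 (split; first by constructor).
have E1 : Psi_SP M X (sigma M X xi) =
    flatten (map (fun J => Psi M X (vel M X xi J)) (enum {set 'I_n})).
  by rewrite /Psi_SP /sigma -map_comp.
have E2 : map h P = flatten (map (fun J => map h (PJ J)) (enum {set 'I_n})).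
  by rewrite /P; elim: (enum _) => //= J s IH; rewrite map_cat IH.
rewrite E1 E2.
apply: F2_flatten => J /=.
rewrite /Psi /PJ /= -(map_comp h).
apply: F2_map => AB /=.
left; split; exact: vel_img.
Qed.
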